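(* Let $\mathcal{A},\mathcal{A}'$ be abelian categories with amplitudes $\alpha,\alpha'$, and let $F\colon\mathcal{A}\to\mathcal{A}'$ be an additive functor for which there exists $K\ge0$ such that $\mathrm{d}_{\alpha'}(F(A),F(B))\le K\,\mathrm{d}_\alpha(A,B)$ for all $A,B\in\operatorname{ob}\mathcal{A}$. Then $\alpha'(F(A))\le K\alpha(A)$ for all $A\in\operatorname{ob}\mathcal{A}$.
   Context: An amplitude on an abelian category $\mathcal{A}$ is a function $\alpha\colon\operatorname{ob}\mathcal{A}\to[0,\infty]$ with $\alpha(0)=0$ such that for every short exact sequence $0\to A\to B\to C\to0$, $\alpha(A)\le\alpha(B)$, $\alpha(C)\le\alpha(B)$ and $\alpha(B)\le\alpha(A)+\alpha(C)$. The path metric $\mathrm{d}_\alpha(A,B)$ is the infimum, over zigzags $A\xleftarrow{\gamma_1}C_1\xrightarrow{\gamma_2}\cdots\xrightarrow{\gamma_n}B$, of $\sum_i\alpha(\ker\gamma_i)+\alpha(\operatorname{coker}\gamma_i)$ ($\inf\emptyset=\infty$). *)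

(* Defs.v *)
From HB Require Import structures.
From mathcomp Require Import all_boot all_order all_algebra.
From mathcomp Require Import boolp classical_sets reals constructive_ereal ereal.
Set Implicit Arguments. Unset Strict Implicit. Unset Printing Implicit Defensive.
Import Order.TTheory GRing.Theory Num.Theory.
Local Open Scope ring_scope.

(* comp g f is "g after f".                                            *)

Record precat := PreCat {
  Obj : Type;
  Hom : Obj -> Obj -> zmodType;
  idm : forall A, Hom A A;
  comp : forall A B C, Hom B C -> Hom A B -> Hom A C;
  compA : forall A B C D (h : Hom C D) (g : Hom B C) (f : Hom A B),
      comp h (comp g f) = comp (comp h g) f;
  comp1m : forall A B (f : Hom A B), comp (idm B) f = f;
  compm1 : forall A B (f : Hom A B), comp f (idm A) = f;
  compDl : forall A B C (g1 g2 : Hom B C) (f : Hom A B),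
      comp (g1 + g2) f = comp g1 f + comp g2 f;
  compDr : forall A B C (g : Hom B C) (f1 f2 : Hom A B),
      comp g (f1 + f2) = comp g f1 + comp g f2
}.
Arguments comp {p A B C}.
Arguments idm {p}.

Section CatDefs.
Variable C : precat.

Definition is_kernel (A B K : Obj C) (g : Hom A B) (k : Hom K A) : Prop :=
  comp g k = 0 /\
  forall X (h : Hom X A), comp g h = 0 ->
    exists u : Hom X K, comp k u = h /\ forall v : Hom X K, comp k v = h -> v = u.

Definition is_cokernel (A B Q : Obj C) (f : Hom A B) (q : Hom B Q) : Prop :=
  comp q f = 0 /\
  forall X (h : Hom B X), comp h f = 0 ->
    exists u : Hom Q X, comp u q = h /\ forall v : Hom Q X, comp v q = h -> v = u.

Definition mono (A B : Obj C) (f : Hom A B) : Prop :=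
  forall X (u v : Hom X A), comp f u = comp f v -> u = v.

Definition epi (A B : Obj C) (f : Hom A B) : Prop :=
  forall X (u v : Hom B X), comp u f = comp v f -> u = v.

Definition is_zero_obj (Z : Obj C) : Prop :=
  (forall X (f g : Hom Z X), f = g) /\ (forall X (f g : Hom X Z), f = g).

Definition is_biproduct (A B P : Obj C) (i1 : Hom A P) (i2 : Hom B P)
  (p1 : Hom P A) (p2 : Hom P B) : Prop :=
  [/\ comp p1 i1 = idm A, comp p2 i2 = idm B, comp p1 i2 = 0, comp p2 i1 = 0
    & comp i1 p1 + comp i2 p2 = idm P].

End CatDefs.

(* Kernels/cokernels are given as data (chosen). *)
Record abcat := AbCat {
  ab_cat :> precat;
  zero_obj : Obj ab_cat;
  zero_objP : is_zero_obj zero_obj;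
  biprodP : forall A B : Obj ab_cat, exists (P : Obj ab_cat) (i1 : Hom A P)
      (i2 : Hom B P) (p1 : Hom P A) (p2 : Hom P B), is_biproduct i1 i2 p1 p2;
  ker : forall A B : Obj ab_cat, Hom A B -> Obj ab_cat;
  kerm : forall A B (f : Hom A B), Hom (ker f) A;
  kermP : forall A B (f : Hom A B), is_kernel f (kerm f);
  coker : forall A B : Obj ab_cat, Hom A B -> Obj ab_cat;
  cokerm : forall A B (f : Hom A B), Hom B (coker f);
  cokermP : forall A B (f : Hom A B), is_cokernel f (cokerm f);
  mono_kernel : forall A B (f : Hom A B), mono f -> is_kernel (cokerm f) f;
  epi_cokernel : forall A B (f : Hom A B), epi f -> is_cokernel (kerm f) f
}.
Arguments ker {a A B}.
Arguments coker {a A B}.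

Definition short_exact (C : abcat) (A B D : Obj C) : Prop :=
  exists (f : Hom A B) (g : Hom B D), is_kernel g f /\ is_cokernel f g.

Record additive_functor (C C' : abcat) := AddFunctor {
  fobj :> Obj C -> Obj C';
  fhom : forall A B, Hom A B -> Hom (fobj A) (fobj B);
  fhom_id : forall A, fhom (idm A) = idm (fobj A);
  fhom_comp : forall A B D (g : Hom B D) (f : Hom A B),
      fhom (comp g f) = comp (fhom g) (fhom f);
  fhom_add : forall A B (f g : Hom A B), fhom (f + g) = fhom f + fhom g
}.

Local Open Scope ereal_scope.

Definition is_amplitude (R : realType) (C : abcat) (al : Obj C -> \bar R) : Prop :=
  [/\ forall A, 0 <= al A,
      al (zero_obj C) = 0
    & forall A B D : Obj C, short_exact A B D ->
        [/\ al A <= al B, al D <= al B & al B <= al A + al D]].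

Inductive zigzag (C : abcat) : Obj C -> Obj C -> Type :=
| zz_nil : forall A, zigzag A A
| zz_fwd : forall A D B, Hom A D -> zigzag D B -> zigzag A B
| zz_bwd : forall A D B, Hom D A -> zigzag D B -> zigzag A B.

Fixpoint zz_cost (R : realType) (C : abcat) (al : Obj C -> \bar R)
  (A B : Obj C) (z : zigzag A B) : \bar R :=
  match z with
  | zz_nil _ => 0
  | zz_fwd _ _ _ g z' => al (ker g) + al (coker g) + zz_cost al z'
  | zz_bwd _ _ _ g z' => al (ker g) + al (coker g) + zz_cost al z'
  end.

(* Path metric: infimum of costs (inf of empty set is +oo) *)
Definition path_dist (R : realType) (C : abcat) (al : Obj C -> \bar R)
  (A B : Obj C) : \bar R :=
  ereal_inf [set x | exists z : zigzag A B, x = zz_cost al z].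

(* Main.v *)
Require Import Defs.
From mathcomp Require Import all_boot all_order all_algebra.
From mathcomp Require Import boolp classical_sets reals constructive_ereal ereal.
Set Implicit Arguments. Unset Strict Implicit. Unset Printing Implicit Defensive.
Import Order.TTheory GRing.Theory Num.Theory.
Import Defs.
Local Open Scope ring_scope.

Section Cat.
Variable C : abcat.

Lemma comp0m (A B D : Obj C) (f : Hom A B) : comp (0 : Hom B D) f = 0.
Proof.
have h := compDl (0 : Hom B D) 0 f; rewrite addr0 in h.
have := congr1 (fun x => x - comp (0 : Hom B D) f) h.
by rewrite addrK subrr => ->.
Qed.

Lemma compm0 (A B D : Obj C) (g : Hom B D) : comp g (0 : Hom A B) = 0.
Proof.
have h := compDr g (0 : Hom A B) 0; rewrite addr0 in h.
have := congr1 (fun x => x - comp g (0 : Hom A B)) h.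
by rewrite addrK subrr => ->.
Qed.

Lemma compBl (A B D : Obj C) (u v : Hom B D) (f : Hom A B) :
  comp (u - v) f = comp u f - comp v f.
Proof.
have h := compDl (u - v) v f; rewrite subrK in h.
by rewrite h addrK.
Qed.

Lemma compBr (A B D : Obj C) (g : Hom B D) (u v : Hom A B) :
  comp g (u - v) = comp g u - comp g v.
Proof.
have h := compDr g (u - v) v; rewrite subrK in h.
by rewrite h addrK.
Qed.

Lemma kernel_mono (A B K : Obj C) (g : Hom A B) (k : Hom K A) :
  is_kernel g k -> mono k.
Proof.
move=> [gk0 H] X u v e.
have z : comp g (comp k u) = 0 by rewrite compA gk0 comp0m.
have [w [_ uw]] := H X _ z.
by rewrite (uw u erefl) (uw v (esym e)).
Qed.

Lemma mono_comp (A B D : Obj C) (g : Hom B D) (f : Hom A B) :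
  mono g -> mono f -> mono (comp g f).
Proof.
move=> mg mf X u v e; apply: mf; apply: mg.
by rewrite !compA.
Qed.

Lemma epi_of (A B : Obj C) (e : Hom A B) :
  (forall X (w : Hom B X), comp w e = 0 -> w = 0) -> epi e.
Proof.
move=> H X u v huv; apply/eqP; rewrite -subr_eq0; apply/eqP; apply: H.
by rewrite compBl huv subrr.
Qed.

Lemma image_ses (A D : Obj C) (g : Hom A D) :
  exists I : Obj C, short_exact (ker g) A I /\ short_exact I D (coker g).
Proof.
set q := cokerm g.
have [qg0 qU] := cokermP g.
have [iq0 iU] := kermP q.
set i := kerm q.
have [e [ie _]] := iU _ g qg0.
have mi : mono i := kernel_mono (kermP q).
have [gk0 kU] := kermP g.
have ek0 : comp e (kerm g) = 0.
  by apply: mi; rewrite compA ie gk0 compm0.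
have epe : epi e.
  apply: epi_of => X w we0.
  have [wk0 wkU] := kermP w.
  set k := kerm w.
  have [e' [ke' _]] := wkU _ e we0.
  have mm : mono (comp i k) := mono_comp mi (kernel_mono (kermP w)).
  have [cm0 cmU] := mono_kernel mm.
  set c := cokerm (comp i k).
  have cg0 : comp c g = 0.
    have : comp c (comp i (comp k e')) = 0 by rewrite (compA i k e') compA cm0 comp0m.
    by rewrite ke' ie.
  have [c' [c'q _]] := qU _ c cg0.
  have ci0 : comp c i = 0 by rewrite -c'q -compA iq0 compm0.
  have [t [mt _]] := cmU _ i ci0.
  have kt : comp k t = idm _.
    apply: mi; rewrite compA mt compm1 //.
  by rewrite -(compm1 w) -kt compA wk0 comp0m.
exists (ker q); split.
- exists (kerm g), e; split.
  + split => // X h eh0.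
    apply: kU.
    have : comp (comp i e) h = 0 by rewrite -compA eh0 compm0.
    by rewrite ie.
  + split => // X h hk0.
    have [k2 k2P] := epi_cokernel epe.
    have ke0 : comp g (kerm e) = 0.
      have : comp (comp i e) (kerm e) = 0 by rewrite -compA (proj1 (kermP e)) compm0.
      by rewrite ie.
    have [u [ku _]] := kU _ _ ke0.
    have [v [ve _]] := k2P X h ltac:(by rewrite -ku compA hk0 comp0m).
    exists v; split => // v' v'e; apply: epe; by rewrite v'e ve.
- exists i, q; split; first exact: kermP.
  split => // X h hi0.
  apply: qU.
  have : comp h (comp i e) = 0 by rewrite compA hi0 comp0m.
  by rewrite ie.
Qed.

End Cat.

Local Open Scope ereal_scope.

Section Amp.
Variables (R : realType) (C : abcat) (al : Obj C -> \bar R).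
Hypothesis hal : is_amplitude al.

Lemma amp_id0 (Y : Obj C) : idm Y = 0%R -> al Y <= 0.
Proof.
move=> hY; case: hal => _ a0 ses.
have [z1 z2] := zero_objP C.
have : short_exact Y (zero_obj C) (zero_obj C).
  exists 0%R, (idm (zero_obj C)); split.
  - split; first by rewrite comp1m.
    move=> X h _; exists 0%R; split; first by rewrite compm0; apply: z2.
    by move=> v _; rewrite -(comp1m v) hY comp0m.
  - split; first by rewrite comp1m.
    move=> X h _; exists h; split; first by rewrite compm1.
    by move=> v; rewrite compm1.
by move=> /ses [+ _ _]; rewrite a0.
Qed.

Lemma amp_step (A D : Obj C) (g : Hom A D) :
  al A <= al (ker g) + al (coker g) + al D /\
  al D <= al (ker g) + al (coker g) + al A.
Proof.
case: hal => ge0 _ ses.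
have [I [s1 s2]] := image_ses g.
have [h1 h2 h3] := ses _ _ _ s1.
have [h4 h5 h6] := ses _ _ _ s2.
split.
- apply: (le_trans h3).
  rewrite -addeA. apply: leeD; first exact: lexx.
  exact: (le_trans h4 (leeDr _ (ge0 _))).
- apply: (le_trans h6).
  rewrite (addeC (al I)) (addeC (al (ker g))) -addeA; apply: leeD; first exact: lexx.
  exact: (le_trans h2 (leeDr _ (ge0 _))).
Qed.

Lemma zz_bound (X Y : Obj C) (z : zigzag X Y) : al X <= zz_cost al z + al Y.
Proof.
elim: z => [A|A D B g z IH|A D B g z IH] /=.
- by rewrite add0e.
- have [h _] := amp_step g.
  apply: (le_trans h); rewrite -!addeA; apply: leeD; first exact: lexx.
  apply: leeD; first exact: lexx; exact: IH.
- have [_ h] := amp_step g.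
  apply: (le_trans h); rewrite -!addeA; apply: leeD; first exact: lexx.
  apply: leeD; first exact: lexx; exact: IH.
Qed.

Lemma amp_le_dist (X Y : Obj C) : idm Y = 0%R -> al X <= path_dist al X Y.
Proof.
move=> hY; apply/ereal_infP => _ [z ->].
apply: (le_trans (zz_bound z)).
rewrite -[leRHS]adde0; apply: leeD; first exact: lexx; exact: amp_id0.
Qed.

Lemma dist_le_amp (X : Obj C) : path_dist al X (zero_obj C) <= al X.
Proof.
set g := (0%R : Hom X (zero_obj C)).
apply: ge_ereal_inf; exists (zz_cost al (zz_fwd g (zz_nil _))).
  by exists (zz_fwd g (zz_nil _)).
case: hal => ge0 a0 ses.
have [I [s1 s2]] := image_ses g.
have [h1 _ _] := ses _ _ _ s1.
have [_ h5 _] := ses _ _ _ s2.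
rewrite /= adde0; apply: le_trans (leeD h1 h5) _.
by rewrite a0 adde0.
Qed.

End Amp.

Lemma fzero (C C' : abcat) (F : additive_functor C C') :
  idm (F (zero_obj C)) = 0%R.
Proof.
rewrite -fhom_id.
have -> : idm (zero_obj C) = 0%R by apply: (proj1 (zero_objP C)).
have h := fhom_add F (0%R : Hom (zero_obj C) (zero_obj C)) 0%R.
rewrite addr0 in h.
have := congr1 (fun x => (x - fhom F (0%R : Hom (zero_obj C) (zero_obj C)))%R) h.
by rewrite addrK subrr => ->.
Qed.

Theorem mainTheorem9 (R : realType) (C C' : abcat)
  (al : Obj C -> \bar R) (al' : Obj C' -> \bar R)
  (hal : is_amplitude al) (hal' : is_amplitude al')
  (F : additive_functor C C') (K : R) :
  (0 <= K)%R ->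
  (forall A B : Obj C,
     (path_dist al' (F A) (F B) <= K%:E * path_dist al A B)%E) ->
  forall A : Obj C, (al' (F A) <= K%:E * al A)%E.
Proof.
move=> K0 HF A.
apply: le_trans (amp_le_dist hal' (F A) (fzero F)) _.
apply: le_trans (HF A (zero_obj C)) _.
apply: lee_wpmul2l; first by rewrite lee_fin.
exact: dist_le_amp.
Qed.
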